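(* Let $\widetilde{SL}_2(\mathbb{R})$ be identified with $\mathbb{R}^3_+=\{(x,y,z):z>0\}$ endowed with the metric $ds^2=\left(dx+\frac{dy}{z}\right)^2+\frac{dy^2+dz^2}{z^2}$, and let $\pi:\mathbb{R}^3_+\to\mathbb{H}^2$, $\pi(x,y,z)=(y,z)$, where $\mathbb{H}^2$ is the upper half-plane with metric $\frac{dy^2+dz^2}{z^2}$ (a Riemannian submersion with minimal fibres). Let $\gamma:I\to\mathbb{H}^2$ be a curve parametrised by arc length with signed curvature $k$. Then the cylinder $S=\pi^{-1}(\gamma(I))$ is a biminimal surface with respect to $\lambda$ in $\widetilde{SL}_2(\mathbb{R})$ if and only if $\gamma$ is a biminimal curve with respect to $\lambda+1$ in $\mathbb{H}^2$, i.e. $k''=k^3+(2+\lambda)k$.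
   Context: For a map $\phi$: tension field $\tau(\phi)=\operatorname{trace}\nabla d\phi$, bitension field $\tau_2(\phi)=\sum_i(\nabla^\phi_{e_i}\nabla^\phi_{e_i}-\nabla^\phi_{\nabla_{e_i}e_i})\tau(\phi)+\sum_iR^N(d\phi(e_i),\tau(\phi))d\phi(e_i)$, with $R(X,Y)Z=\nabla_{[X,Y]}Z-\nabla_X\nabla_YZ+\nabla_Y\nabla_XZ$. An immersion is biminimal with respect to $\lambda\in\mathbb{R}$ if $[\tau_2(\phi)]^\perp-\lambda[\tau(\phi)]^\perp=0$ ($\perp$ = normal component). For an arc-length curve on a surface of Gaussian curvature $G$ with signed curvature $k$, biminimality with respect to $\mu$ means $k''-k^3+kG-\mu k=0$ (here $G=-1$). *)

(* Defs.v *)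
From Stdlib Require Import Reals.
From Coquelicot Require Import Coquelicot.
Open Scope R_scope.

(* A point of R^n is a function nat -> R (only indices < n matter). *)
Definition point := nat -> R.

Fixpoint rsum (n : nat) (f : nat -> R) : R :=
  match n with O => 0 | S p => rsum p f + f p end.

Definition upd (x : point) (i : nat) (t : R) : point :=
  fun j => if Nat.eqb j i then t else x j.

Definition pd (i : nat) (f : point -> R) (x : point) : R :=
  Derive (fun t => f (upd x i t)) (x i).

Definition metric := point -> nat -> nat -> R.

Definition christoffel (n : nat) (g ginv : metric) (x : point) (k i j : nat) : R :=
  / 2 * rsum n (fun l => ginv x k l *
      (pd i (fun y => g y j l) x + pd j (fun y => g y i l) x
       - pd l (fun y => g y i j) x)).

(* Curvature with the paper's convention
   R(X,Y)Z = nabla_[X,Y] Z - nabla_X nabla_Y Z + nabla_Y nabla_X Z,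
   components: R(d_i,d_j)d_l = sum_k riem x k i j l d_k. *)
Definition riem (n : nat) (g ginv : metric) (x : point) (k i j l : nat) : R :=
  let G := christoffel n g ginv in
  - (pd i (fun y => G y k j l) x - pd j (fun y => G y k i l) x
     + rsum n (fun p => G x k i p * G x p j l - G x k j p * G x p i l)).

Definition inv2 (M : nat -> nat -> R) : nat -> nat -> R :=
  let d := M 0%nat 0%nat * M 1%nat 1%nat - M 0%nat 1%nat * M 1%nat 0%nat in
  fun a b => match a, b with
  | 0, 0 => M 1%nat 1%nat / d
  | 0, 1 => - M 0%nat 1%nat / d
  | 1, 0 => - M 1%nat 0%nat / d
  | 1, 1 => M 0%nat 0%nat / d
  | _, _ => 0 end.

Section Immersion.
Variables (n : nat) (g ginv : metric) (phi : point -> point).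

Definition dphi (a : nat) (u : point) (k : nat) : R := pd a (fun w => phi w k) u.

Definition ind_metric : metric := fun u a b =>
  rsum n (fun i => rsum n (fun j => g (phi u) i j * dphi a u i * dphi b u j)).
Definition ind_metric_inv : metric := fun u => inv2 (ind_metric u).
Definition ind_chr (u : point) (c a b : nat) : R :=
  christoffel 2 ind_metric ind_metric_inv u c a b.

(* sections of phi^{-1} TN: V u k = k-th component at parameter u *)
Definition section := point -> nat -> R.

Definition cov (a : nat) (V : section) : section := fun u k =>
  pd a (fun w => V w k) u
  + rsum n (fun i => rsum n (fun j =>
      christoffel n g ginv (phi u) k i j * dphi a u i * V u j)).

Definition tension : section := fun u k =>
  rsum 2 (fun a => rsum 2 (fun b => ind_metric_inv u a b *
    (cov a (dphi b) u k - rsum 2 (fun c => ind_chr u c a b * dphi c u k)))).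

Definition rough_lap (V : section) : section := fun u k =>
  rsum 2 (fun a => rsum 2 (fun b => ind_metric_inv u a b *
    (cov a (cov b V) u k - rsum 2 (fun c => ind_chr u c a b * cov c V u k)))).

Definition bitension : section := fun u k =>
  rough_lap tension u k
  + rsum 2 (fun a => rsum 2 (fun b => ind_metric_inv u a b *
      rsum n (fun i => rsum n (fun j => rsum n (fun l =>
        riem n g ginv (phi u) k i j l * dphi a u i * tension u j * dphi b u l))))).

Definition normal_part (V : section) : section := fun u k =>
  V u k - rsum 2 (fun a => rsum 2 (fun b => ind_metric_inv u a b *
    rsum n (fun i => rsum n (fun j => g (phi u) i j * V u i * dphi a u j))
    * dphi b u k)).

Definition biminimal (lambda : R) (D : point -> Prop) : Prop :=
  forall u, D u -> forall k, (k < n)%nat ->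
    normal_part bitension u k - lambda * normal_part tension u k = 0.
End Immersion.

(* SL2~(R) = R^3_+ with coordinates (x,y,z) = (x 0, x 1, x 2),
   ds^2 = (dx + dy/z)^2 + (dy^2 + dz^2)/z^2 *)
Definition sl2_metric : metric := fun x i j =>
  let z := x 2%nat in
  match i, j with
  | 0, 0 => 1
  | 0, 1 | 1, 0 => / z
  | 1, 1 => 2 / z ^ 2
  | 2, 2 => / z ^ 2
  | _, _ => 0 end.
Definition sl2_metric_inv : metric := fun x i j =>
  let z := x 2%nat in
  match i, j with
  | 0, 0 => 2
  | 0, 1 | 1, 0 => - z
  | 1, 1 => z ^ 2
  | 2, 2 => z ^ 2
  | _, _ => 0 end.

(* H^2 = upper half plane, coordinates (y,z) = (p 0, p 1), (dy^2+dz^2)/z^2 *)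
Definition hyp_metric : metric := fun p i j =>
  match i, j with
  | 0, 0 | 1, 1 => / (p 1%nat) ^ 2
  | _, _ => 0 end.
Definition hyp_metric_inv : metric := fun p i j =>
  match i, j with
  | 0, 0 | 1, 1 => (p 1%nat) ^ 2
  | _, _ => 0 end.

Definition vel (gam : R -> point) (s : R) (k : nat) : R := Derive (fun t => gam t k) s.

Definition acc (gam : R -> point) (s : R) (k : nat) : R :=
  Derive (fun t => vel gam t k) s
  + rsum 2 (fun i => rsum 2 (fun j =>
      christoffel 2 hyp_metric hyp_metric_inv (gam s) k i j
        * vel gam s i * vel gam s j)).

(* unit normal N = J T (rotation by +pi/2; conformal metric) *)
Definition unormal (gam : R -> point) (s : R) (k : nat) : R :=
  match k with 0 => - vel gam s 1%nat | 1 => vel gam s 0%nat | _ => 0 end.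

Definition signed_curv (gam : R -> point) (s : R) : R :=
  rsum 2 (fun i => rsum 2 (fun j =>
    hyp_metric (gam s) i j * acc gam s i * unormal gam s j)).

(* biminimal curve w.r.t. mu on a surface of Gaussian curvature G = -1:
   k'' - k^3 + k G - mu k = 0 *)
Definition biminimal_curve_H2 (gam : R -> point) (mu : R) (I : R -> Prop) : Prop :=
  forall s, I s ->
    let k := signed_curv gam in
    Derive_n k 2 s - (k s) ^ 3 + k s * (-1) - mu * k s = 0.

(* the vertical cylinder pi^{-1}(gamma(I)), parametrised by (s,t) = (u 0, u 1)
   as (s,t) |-> (t, gamma(s)) *)
Definition cylinder (gam : R -> point) : point -> point := fun u k =>
  match k with
  | 0 => u 1%nat
  | 1 => gam (u 0%nat) 0%nat
  | 2 => gam (u 0%nat) 1%nat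
  | _ => 0 end.

(* Main.v *)
Require Import Defs.
From Stdlib Require Import Reals Lra Lia.
From Coquelicot Require Import Coquelicot.
Open Scope R_scope.

Lemma upd_same (x : point) i t : upd x i t i = t.
Proof. unfold upd. rewrite Nat.eqb_refl. reflexivity. Qed.
Lemma upd_other (x : point) i j t : j <> i -> upd x i t j = x j.
Proof. intros H. unfold upd. destruct (Nat.eqb_spec j i); [contradiction|reflexivity]. Qed.

Lemma pd_const (X : point -> R) (u : point) i :
  (forall t, X (upd u i t) = X u) -> pd i X u = 0.
Proof.
  intros H. unfold pd. rewrite (Derive_ext _ (fun _ => X u)) by exact H.
  apply Derive_const.
Qed.

Lemma pd_loc (X : point -> R) (F : R -> R) (u : point) i (P : R -> Prop) l :
  open P -> P (u i) ->
  (forall t, P t -> X (upd u i t) = F t) -> is_derive F (u i) l -> pd i X u = l.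
Proof.
  intros HO HP H HD. unfold pd.
  rewrite (Derive_ext_loc _ F).
  - now apply is_derive_unique.
  - apply (filter_imp P); [exact H| apply HO; exact HP].
Qed.

Lemma pos_open : open (fun t : R => 0 < t).
Proof.
  intros x Hx. generalize (open_Rbar_gt (Finite 0) x Hx). apply filter_imp. auto.
Qed.

Definition zz (gam : R -> point) (s : R) : R := gam s 1%nat.
Definition jy (gam : R -> point) (m : nat) (s : R) : R := Derive_n (fun t => gam t 0%nat) m s.
Definition jz (gam : R -> point) (m : nat) (s : R) : R := Derive_n (fun t => gam t 1%nat) m s.
Definition cc (gam : R -> point) (s : R) : R := jy gam 1 s / zz gam s.
Definition dd (gam : R -> point) (s : R) : R := jz gam 1 s / zz gam s.
Definition ww (gam : R -> point) (s : R) : R :=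
  (jy gam 1 s * jz gam 2 s - jz gam 1 s * jy gam 2 s) / (zz gam s)^2.
Definition ww1 (gam : R -> point) (s : R) : R :=
  (jy gam 1 s * jz gam 3 s - jz gam 1 s * jy gam 3 s) / (zz gam s)^2
  - 2 * (jy gam 1 s * jz gam 2 s - jz gam 1 s * jy gam 2 s) * jz gam 1 s / (zz gam s)^3.
Definition ww2 (gam : R -> point) (s : R) : R :=
  (jy gam 2 s * jz gam 3 s + jy gam 1 s * jz gam 4 s - jz gam 2 s * jy gam 3 s
     - jz gam 1 s * jy gam 4 s) / (zz gam s)^2
  - 4 * (jy gam 1 s * jz gam 3 s - jz gam 1 s * jy gam 3 s) * jz gam 1 s / (zz gam s)^3
  - 2 * (jy gam 1 s * jz gam 2 s - jz gam 1 s * jy gam 2 s)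
      * (jz gam 2 s / (zz gam s)^3 - 3 * (jz gam 1 s)^2 / (zz gam s)^4).
Arguments zz : simpl never.
Arguments jy : simpl never.
Arguments jz : simpl never.
Arguments cc : simpl never.
Arguments dd : simpl never.
Arguments ww : simpl never.
Arguments ww1 : simpl never.
Arguments ww2 : simpl never.
Definition dslm  (i0 i1 : nat) (z : R) : R :=
  match i0, i1 with
  | 0, 1 => ((-1) * / z^2)
  | 1, 0 => ((-1) * / z^2)
  | 1, 1 => ((-4) * / z^3)
  | 2, 2 => ((-2) * / z^3)
  | _, _ => 0
  end.

Definition Csl  (i0 i1 i2 : nat) (z : R) : R :=
  match i0, i1, i2 with
  | 0, 0, 2 => (1 * / 2 * / z)
  | 0, 1, 2 => (1 * / z^2)
  | 0, 2, 0 => (1 * / 2 * / z)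
  | 0, 2, 1 => (1 * / z^2)
  | 1, 0, 2 => ((-1) * / 2)
  | 1, 1, 2 => ((-3) * / 2 * / z)
  | 1, 2, 0 => ((-1) * / 2)
  | 1, 2, 1 => ((-3) * / 2 * / z)
  | 2, 0, 1 => (1 * / 2)
  | 2, 1, 0 => (1 * / 2)
  | 2, 1, 1 => (2 * / z)
  | 2, 2, 2 => ((-1) * / z)
  | _, _, _ => 0
  end.

Definition DCsl  (i0 i1 i2 : nat) (z : R) : R :=
  match i0, i1, i2 with
  | 0, 0, 2 => ((-1) * / 2 * / z^2)
  | 0, 1, 2 => ((-2) * / z^3)
  | 0, 2, 0 => ((-1) * / 2 * / z^2)
  | 0, 2, 1 => ((-2) * / z^3)
  | 1, 1, 2 => (3 * / 2 * / z^2)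
  | 1, 2, 1 => (3 * / 2 * / z^2)
  | 2, 1, 1 => ((-2) * / z^2)
  | 2, 2, 2 => (1 * / z^2)
  | _, _, _ => 0
  end.

Definition Rsl  (i0 i1 i2 i3 : nat) (z : R) : R :=
  match i0, i1, i2, i3 with
  | 0, 0, 1, 0 => ((-1) * / 4 * / z)
  | 0, 0, 1, 1 => ((-1) * / 2 * / z^2)
  | 0, 0, 2, 2 => ((-1) * / 4 * / z^2)
  | 0, 1, 0, 0 => (1 * / 4 * / z)
  | 0, 1, 0, 1 => (1 * / 2 * / z^2)
  | 0, 1, 2, 2 => ((-2) * / z^3)
  | 0, 2, 0, 2 => (1 * / 4 * / z^2)
  | 0, 2, 1, 2 => (2 * / z^3)
  | 1, 0, 1, 0 => (1 * / 4)
  | 1, 0, 1, 1 => (1 * / 4 * / z)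
  | 1, 1, 0, 0 => ((-1) * / 4)
  | 1, 1, 0, 1 => ((-1) * / 4 * / z)
  | 1, 1, 2, 2 => (7 * / 4 * / z^2)
  | 1, 2, 1, 2 => ((-7) * / 4 * / z^2)
  | 2, 0, 2, 0 => (1 * / 4)
  | 2, 0, 2, 1 => (1 * / 4 * / z)
  | 2, 1, 2, 0 => (1 * / 4 * / z)
  | 2, 1, 2, 1 => ((-3) * / 2 * / z^2)
  | 2, 2, 0, 0 => ((-1) * / 4)
  | 2, 2, 0, 1 => ((-1) * / 4 * / z)
  | 2, 2, 1, 0 => ((-1) * / 4 * / z)
  | 2, 2, 1, 1 => (3 * / 2 * / z^2)
  | _, _, _, _ => 0
  end.

Definition dhm  (i0 i1 : nat) (z : R) : R :=
  match i0, i1 with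
  | 0, 0 => ((-2) * / z^3)
  | 1, 1 => ((-2) * / z^3)
  | _, _ => 0
  end.

Definition Ch  (i0 i1 i2 : nat) (z : R) : R :=
  match i0, i1, i2 with
  | 0, 0, 1 => ((-1) * / z)
  | 0, 1, 0 => ((-1) * / z)
  | 1, 0, 0 => (1 * / z)
  | 1, 1, 1 => ((-1) * / z)
  | _, _, _ => 0
  end.

Definition DP (gam : R -> point) (i0 i1 : nat) (s : R) : R :=
  match i0, i1 with
  | 0, 1 => (1 * (zz gam s) * (cc gam s))
  | 0, 2 => (1 * (zz gam s) * (dd gam s))
  | 1, 0 => (1)
  | _, _ => 0
  end.

Definition DDP (gam : R -> point) (i0 i1 : nat) (s : R) : R :=
  match i0, i1 with
  | 0, 1 => ((-1) * (zz gam s) * (dd gam s) * (ww gam s) + 1 * (zz gam s) * (cc gam s) * (dd gam s))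
  | 0, 2 => (1 * (zz gam s) * (dd gam s)^2 + 1 * (zz gam s) * (cc gam s) * (ww gam s))
  | _, _ => 0
  end.

Definition Mcf (gam : R -> point) (i0 i1 : nat) (s : R) : R :=
  match i0, i1 with
  | 0, 0 => (1 * (dd gam s)^2 + 2 * (cc gam s)^2)
  | 0, 1 => (1 * (cc gam s))
  | 1, 0 => (1 * (cc gam s))
  | 1, 1 => (1)
  | _, _ => 0
  end.

Definition DMcf (gam : R -> point) (i0 i1 : nat) (s : R) : R :=
  match i0, i1 with
  | 0, 0 => ((-2) * (cc gam s) * (dd gam s) * (ww gam s))
  | 0, 1 => ((-1) * (dd gam s) * (ww gam s))
  | 1, 0 => ((-1) * (dd gam s) * (ww gam s))
  | _, _ => 0
  end.

Definition MIcf (gam : R -> point) (i0 i1 : nat) (s : R) : R :=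
  match i0, i1 with
  | 0, 0 => (1)
  | 0, 1 => ((-1) * (cc gam s))
  | 1, 0 => ((-1) * (cc gam s))
  | 1, 1 => (1 * (dd gam s)^2 + 2 * (cc gam s)^2)
  | _, _ => 0
  end.

Definition ICcf (gam : R -> point) (i0 i1 i2 : nat) (s : R) : R :=
  match i0, i1, i2 with
  | 1, 0, 0 => ((-1) * (dd gam s)^3 * (ww gam s) + (-1) * (cc gam s)^2 * (dd gam s) * (ww gam s))
  | _, _, _ => 0
  end.

Definition Tcf (gam : R -> point) (i0 : nat) (s : R) : R :=
  match i0 with
  | 0 => (1 * (dd gam s)^3 * (ww gam s) + 1 * (cc gam s) * (dd gam s) + 1 * (cc gam s)^2 * (dd gam s) * (ww gam s))
  | 1 => ((-1) * (zz gam s) * (dd gam s) * (ww gam s) + (-1) * (zz gam s) * (cc gam s) * (dd gam s))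
  | 2 => (1 * (zz gam s) * (cc gam s) * (ww gam s) + 1 * (zz gam s) * (cc gam s)^2)
  | _ => 0
  end.

Definition DTcf (gam : R -> point) (i0 : nat) (s : R) : R :=
  match i0 with
  | 0 => ((-1) * (dd gam s)^2 * (ww gam s) + 1 * (dd gam s)^3 * (ww1 gam s) + 1 * (cc gam s) * (dd gam s)^2 * (ww gam s)^2 + 1 * (cc gam s)^2 * (ww gam s) + 1 * (cc gam s)^2 * (dd gam s) * (ww1 gam s) + 1 * (cc gam s)^3 * (ww gam s)^2)
  | 1 => ((-1) * (zz gam s) * (dd gam s) * (ww1 gam s) + (-1) * (zz gam s) * (cc gam s) * (ww gam s)^2 + (-1) * (zz gam s) * (cc gam s) * (dd gam s)^2 + (-1) * (zz gam s) * (cc gam s)^2 * (ww gam s))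
  | 2 => ((-1) * (zz gam s) * (dd gam s) * (ww gam s)^2 + 1 * (zz gam s) * (cc gam s) * (ww1 gam s) + (-1) * (zz gam s) * (cc gam s) * (dd gam s) * (ww gam s) + 1 * (zz gam s) * (cc gam s)^2 * (dd gam s))
  | _ => 0
  end.

Definition CTcf (gam : R -> point) (i0 i1 : nat) (s : R) : R :=
  match i0, i1 with
  | 0, 0 => ((-2) * (dd gam s)^2 * (ww gam s) + 1 * (dd gam s)^3 * (ww1 gam s) + 1 * / 2 * (dd gam s)^4 * (ww gam s) + (-1) * / 2 * (cc gam s) * (dd gam s)^2 + 1 * (cc gam s) * (dd gam s)^2 * (ww gam s)^2 + 2 * (cc gam s)^2 * (ww gam s) + 1 * (cc gam s)^2 * (dd gam s) * (ww1 gam s) + 1 * / 2 * (cc gam s)^2 * (dd gam s)^2 * (ww gam s) + 1 * (cc gam s)^3 + 1 * (cc gam s)^3 * (ww gam s)^2)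
  | 0, 1 => ((-1) * (zz gam s) * (dd gam s) * (ww1 gam s) + 3 * / 2 * (zz gam s) * (dd gam s)^2 * (ww gam s) + (-1) * / 2 * (zz gam s) * (dd gam s)^4 * (ww gam s) + (-1) * (zz gam s) * (cc gam s) * (ww gam s)^2 + (-5) * / 2 * (zz gam s) * (cc gam s)^2 * (ww gam s) + (-1) * / 2 * (zz gam s) * (cc gam s)^2 * (dd gam s)^2 * (ww gam s) + (-3) * / 2 * (zz gam s) * (cc gam s)^3)
  | 0, 2 => ((-1) * (zz gam s) * (dd gam s) * (ww gam s)^2 + 1 * (zz gam s) * (cc gam s) * (ww1 gam s) + (-4) * (zz gam s) * (cc gam s) * (dd gam s) * (ww gam s) + 1 * / 2 * (zz gam s) * (cc gam s) * (dd gam s)^3 * (ww gam s) + (-3) * / 2 * (zz gam s) * (cc gam s)^2 * (dd gam s) + 1 * / 2 * (zz gam s) * (cc gam s)^3 * (dd gam s) * (ww gam s))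
  | 1, 0 => (1 * / 2 * (cc gam s) * (ww gam s) + 1 * / 2 * (cc gam s)^2)
  | 1, 1 => ((-1) * / 2 * (zz gam s) * (cc gam s) * (ww gam s) + (-1) * / 2 * (zz gam s) * (cc gam s)^2)
  | 1, 2 => ((-1) * / 2 * (zz gam s) * (dd gam s) * (ww gam s) + (-1) * / 2 * (zz gam s) * (cc gam s) * (dd gam s))
  | _, _ => 0
  end.

Definition DCTcf (gam : R -> point) (i0 i1 : nat) (s : R) : R :=
  match i0, i1 with
  | 0, 0 => ((-2) * (dd gam s)^2 * (ww1 gam s) + 1 * (dd gam s)^3 * (ww2 gam s) + 1 * / 2 * (dd gam s)^3 * (ww gam s) + (-1) * (dd gam s)^3 * (ww gam s)^3 + 1 * / 2 * (dd gam s)^4 * (ww1 gam s) + (-8) * (cc gam s) * (dd gam s) * (ww gam s)^2 + 3 * (cc gam s) * (dd gam s)^2 * (ww gam s) * (ww1 gam s) + 1 * (cc gam s) * (dd gam s)^3 * (ww gam s)^2 + 2 * (cc gam s)^2 * (ww1 gam s) + 1 * (cc gam s)^2 * (dd gam s) * (ww2 gam s) + (-4) * (cc gam s)^2 * (dd gam s) * (ww gam s) + (-1) * (cc gam s)^2 * (dd gam s) * (ww gam s)^3 + 1 * / 2 * (cc gam s)^2 * (dd gam s)^2 * (ww1 gam s) + 3 * (cc gam s)^3 * (ww gam s) * (ww1 gam s) + 1 * (cc gam s)^3 * (dd gam s) * (ww gam s)^2)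
  | 0, 1 => ((-1) * (zz gam s) * (dd gam s) * (ww2 gam s) + 1 * (zz gam s) * (dd gam s) * (ww gam s)^3 + 1 * / 2 * (zz gam s) * (dd gam s)^2 * (ww1 gam s) + 3 * / 2 * (zz gam s) * (dd gam s)^3 * (ww gam s) + (-1) * / 2 * (zz gam s) * (dd gam s)^4 * (ww1 gam s) + (-1) * / 2 * (zz gam s) * (dd gam s)^5 * (ww gam s) + (-3) * (zz gam s) * (cc gam s) * (ww gam s) * (ww1 gam s) + 7 * (zz gam s) * (cc gam s) * (dd gam s) * (ww gam s)^2 + (-1) * (zz gam s) * (cc gam s) * (dd gam s)^3 * (ww gam s)^2 + (-5) * / 2 * (zz gam s) * (cc gam s)^2 * (ww1 gam s) + 2 * (zz gam s) * (cc gam s)^2 * (dd gam s) * (ww gam s) + (-1) * / 2 * (zz gam s) * (cc gam s)^2 * (dd gam s)^2 * (ww1 gam s) + (-1) * / 2 * (zz gam s) * (cc gam s)^2 * (dd gam s)^3 * (ww gam s) + (-3) * / 2 * (zz gam s) * (cc gam s)^3 * (dd gam s) + (-1) * (zz gam s) * (cc gam s)^3 * (dd gam s) * (ww gam s)^2)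
  | 0, 2 => ((-3) * (zz gam s) * (dd gam s) * (ww gam s) * (ww1 gam s) + 3 * (zz gam s) * (dd gam s)^2 * (ww gam s)^2 + (-1) * / 2 * (zz gam s) * (dd gam s)^4 * (ww gam s)^2 + 1 * (zz gam s) * (cc gam s) * (ww2 gam s) + (-1) * (zz gam s) * (cc gam s) * (ww gam s)^3 + (-3) * (zz gam s) * (cc gam s) * (dd gam s) * (ww1 gam s) + (-1) * (zz gam s) * (cc gam s) * (dd gam s)^2 * (ww gam s) + 1 * / 2 * (zz gam s) * (cc gam s) * (dd gam s)^3 * (ww1 gam s) + 1 * / 2 * (zz gam s) * (cc gam s) * (dd gam s)^4 * (ww gam s) + (-4) * (zz gam s) * (cc gam s)^2 * (ww gam s)^2 + (-3) * / 2 * (zz gam s) * (cc gam s)^2 * (dd gam s)^2 + (-3) * / 2 * (zz gam s) * (cc gam s)^3 * (ww gam s) + 1 * / 2 * (zz gam s) * (cc gam s)^3 * (dd gam s) * (ww1 gam s) + 1 * / 2 * (zz gam s) * (cc gam s)^3 * (dd gam s)^2 * (ww gam s) + 1 * / 2 * (zz gam s) * (cc gam s)^4 * (ww gam s)^2)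
  | 1, 0 => ((-1) * / 2 * (dd gam s) * (ww gam s)^2 + 1 * / 2 * (cc gam s) * (ww1 gam s) + (-1) * (cc gam s) * (dd gam s) * (ww gam s))
  | 1, 1 => (1 * / 2 * (zz gam s) * (dd gam s) * (ww gam s)^2 + (-1) * / 2 * (zz gam s) * (cc gam s) * (ww1 gam s) + 1 * / 2 * (zz gam s) * (cc gam s) * (dd gam s) * (ww gam s) + (-1) * / 2 * (zz gam s) * (cc gam s)^2 * (dd gam s))
  | 1, 2 => ((-1) * / 2 * (zz gam s) * (dd gam s) * (ww1 gam s) + (-1) * / 2 * (zz gam s) * (cc gam s) * (ww gam s)^2 + (-1) * / 2 * (zz gam s) * (cc gam s) * (dd gam s)^2 + (-1) * / 2 * (zz gam s) * (cc gam s)^2 * (ww gam s))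
  | _, _ => 0
  end.

Definition CCTcf (gam : R -> point) (i0 i1 i2 : nat) (s : R) : R :=
  match i0, i1, i2 with
  | 0, 0, 0 => ((-3) * (dd gam s)^2 * (ww1 gam s) + 1 * (dd gam s)^3 * (ww2 gam s) + 1 * (dd gam s)^3 * (ww gam s) + (-1) * (dd gam s)^3 * (ww gam s)^3 + 1 * (dd gam s)^4 * (ww1 gam s) + (-1) * / 4 * (dd gam s)^5 * (ww gam s) + (-10) * (cc gam s) * (dd gam s) * (ww gam s)^2 + 3 * (cc gam s) * (dd gam s)^2 * (ww gam s) * (ww1 gam s) + (-1) * / 4 * (cc gam s) * (dd gam s)^3 + 3 * / 2 * (cc gam s) * (dd gam s)^3 * (ww gam s)^2 + 3 * (cc gam s)^2 * (ww1 gam s) + 1 * (cc gam s)^2 * (dd gam s) * (ww2 gam s) + (-19) * / 2 * (cc gam s)^2 * (dd gam s) * (ww gam s) + (-1) * (cc gam s)^2 * (dd gam s) * (ww gam s)^3 + 1 * (cc gam s)^2 * (dd gam s)^2 * (ww1 gam s) + 1 * / 4 * (cc gam s)^2 * (dd gam s)^3 * (ww gam s) + 3 * (cc gam s)^3 * (ww gam s) * (ww1 gam s) + (-5) * / 2 * (cc gam s)^3 * (dd gam s) + 3 * / 2 * (cc gam s)^3 * (dd gam s) * (ww gam s)^2 + 1 * / 2 * (cc gam s)^4 * (dd gam s) * (ww gam s))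
  | 0, 0, 1 => ((-1) * (zz gam s) * (dd gam s) * (ww2 gam s) + 1 * (zz gam s) * (dd gam s) * (ww gam s)^3 + 2 * (zz gam s) * (dd gam s)^2 * (ww1 gam s) + 1 * / 4 * (zz gam s) * (dd gam s)^3 * (ww gam s) + (-1) * (zz gam s) * (dd gam s)^4 * (ww1 gam s) + (-3) * (zz gam s) * (cc gam s) * (ww gam s) * (ww1 gam s) + 10 * (zz gam s) * (cc gam s) * (dd gam s) * (ww gam s)^2 + 1 * / 4 * (zz gam s) * (cc gam s) * (dd gam s)^3 + (-3) * / 2 * (zz gam s) * (cc gam s) * (dd gam s)^3 * (ww gam s)^2 + (-4) * (zz gam s) * (cc gam s)^2 * (ww1 gam s) + 43 * / 4 * (zz gam s) * (cc gam s)^2 * (dd gam s) * (ww gam s) + (-1) * (zz gam s) * (cc gam s)^2 * (dd gam s)^2 * (ww1 gam s) + (-3) * / 4 * (zz gam s) * (cc gam s)^2 * (dd gam s)^3 * (ww gam s) + 5 * / 2 * (zz gam s) * (cc gam s)^3 * (dd gam s) + (-3) * / 2 * (zz gam s) * (cc gam s)^3 * (dd gam s) * (ww gam s)^2 + (-3) * / 4 * (zz gam s) * (cc gam s)^4 * (dd gam s) * (ww gam s))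
  | 0, 0, 2 => ((-3) * (zz gam s) * (dd gam s) * (ww gam s) * (ww1 gam s) + 4 * (zz gam s) * (dd gam s)^2 * (ww gam s)^2 + (-1) * / 2 * (zz gam s) * (dd gam s)^4 * (ww gam s)^2 + 1 * (zz gam s) * (cc gam s) * (ww2 gam s) + (-1) * (zz gam s) * (cc gam s) * (ww gam s)^3 + (-6) * (zz gam s) * (cc gam s) * (dd gam s) * (ww1 gam s) + 5 * (zz gam s) * (cc gam s) * (dd gam s)^2 * (ww gam s) + 1 * (zz gam s) * (cc gam s) * (dd gam s)^3 * (ww1 gam s) + (-3) * / 4 * (zz gam s) * (cc gam s) * (dd gam s)^4 * (ww gam s) + (-6) * (zz gam s) * (cc gam s)^2 * (ww gam s)^2 + (-1) * / 4 * (zz gam s) * (cc gam s)^2 * (dd gam s)^2 + 1 * / 2 * (zz gam s) * (cc gam s)^2 * (dd gam s)^2 * (ww gam s)^2 + (-11) * / 2 * (zz gam s) * (cc gam s)^3 * (ww gam s) + 1 * (zz gam s) * (cc gam s)^3 * (dd gam s) * (ww1 gam s) + (-3) * / 4 * (zz gam s) * (cc gam s)^3 * (dd gam s)^2 * (ww gam s) + (-5) * / 2 * (zz gam s) * (cc gam s)^4 + 1 * (zz gam s) * (cc gam s)^4 * (ww gam s)^2)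
  | 0, 1, 0 => ((-1) * / 2 * (dd gam s) * (ww gam s)^2 + 1 * / 2 * (cc gam s) * (ww1 gam s) + (-7) * / 4 * (cc gam s) * (dd gam s) * (ww gam s) + (-3) * / 4 * (cc gam s)^2 * (dd gam s))
  | 0, 1, 1 => (1 * / 2 * (zz gam s) * (dd gam s) * (ww gam s)^2 + (-1) * / 2 * (zz gam s) * (cc gam s) * (ww1 gam s) + 7 * / 4 * (zz gam s) * (cc gam s) * (dd gam s) * (ww gam s) + 3 * / 4 * (zz gam s) * (cc gam s)^2 * (dd gam s))
  | 0, 1, 2 => ((-1) * / 2 * (zz gam s) * (dd gam s) * (ww1 gam s) + 1 * / 2 * (zz gam s) * (dd gam s)^2 * (ww gam s) + (-1) * / 2 * (zz gam s) * (cc gam s) * (ww gam s)^2 + (-5) * / 4 * (zz gam s) * (cc gam s)^2 * (ww gam s) + (-3) * / 4 * (zz gam s) * (cc gam s)^3)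
  | 1, 0, 0 => ((-1) * / 2 * (dd gam s) * (ww gam s)^2 + 1 * / 2 * (cc gam s) * (ww1 gam s) + (-2) * (cc gam s) * (dd gam s) * (ww gam s) + 1 * / 4 * (cc gam s) * (dd gam s)^3 * (ww gam s) + (-3) * / 4 * (cc gam s)^2 * (dd gam s) + 1 * / 4 * (cc gam s)^3 * (dd gam s) * (ww gam s))
  | 1, 0, 1 => (1 * / 2 * (zz gam s) * (dd gam s) * (ww gam s)^2 + (-1) * / 2 * (zz gam s) * (cc gam s) * (ww1 gam s) + 2 * (zz gam s) * (cc gam s) * (dd gam s) * (ww gam s) + (-1) * / 4 * (zz gam s) * (cc gam s) * (dd gam s)^3 * (ww gam s) + 3 * / 4 * (zz gam s) * (cc gam s)^2 * (dd gam s) + (-1) * / 4 * (zz gam s) * (cc gam s)^3 * (dd gam s) * (ww gam s))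
  | 1, 0, 2 => ((-1) * / 2 * (zz gam s) * (dd gam s) * (ww1 gam s) + 3 * / 4 * (zz gam s) * (dd gam s)^2 * (ww gam s) + (-1) * / 4 * (zz gam s) * (dd gam s)^4 * (ww gam s) + (-1) * / 2 * (zz gam s) * (cc gam s) * (ww gam s)^2 + (-5) * / 4 * (zz gam s) * (cc gam s)^2 * (ww gam s) + (-1) * / 4 * (zz gam s) * (cc gam s)^2 * (dd gam s)^2 * (ww gam s) + (-3) * / 4 * (zz gam s) * (cc gam s)^3)
  | 1, 1, 0 => ((-1) * / 4 * (dd gam s) * (ww gam s) + (-1) * / 4 * (cc gam s) * (dd gam s))
  | 1, 1, 1 => (1 * / 4 * (zz gam s) * (dd gam s) * (ww gam s) + 1 * / 4 * (zz gam s) * (cc gam s) * (dd gam s))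
  | 1, 1, 2 => ((-1) * / 4 * (zz gam s) * (cc gam s) * (ww gam s) + (-1) * / 4 * (zz gam s) * (cc gam s)^2)
  | _, _, _ => 0
  end.

Definition BTcf (gam : R -> point) (i0 : nat) (s : R) : R :=
  match i0 with
  | 0 => ((-3) * (dd gam s)^2 * (ww1 gam s) + 1 * (dd gam s)^3 * (ww2 gam s) + (-1) * (dd gam s)^3 * (ww gam s) + (-1) * (dd gam s)^3 * (ww gam s)^3 + 1 * (dd gam s)^4 * (ww1 gam s) + (-9) * (cc gam s) * (dd gam s) * (ww gam s)^2 + 3 * (cc gam s) * (dd gam s)^2 * (ww gam s) * (ww1 gam s) + (-2) * (cc gam s) * (dd gam s)^3 + 2 * (cc gam s) * (dd gam s)^3 * (ww gam s)^2 + 2 * (cc gam s)^2 * (ww1 gam s) + 1 * (cc gam s)^2 * (dd gam s) * (ww2 gam s) + (-8) * (cc gam s)^2 * (dd gam s) * (ww gam s) + (-1) * (cc gam s)^2 * (dd gam s) * (ww gam s)^3 + 1 * (cc gam s)^2 * (dd gam s)^2 * (ww1 gam s) + 1 * (cc gam s)^2 * (dd gam s)^3 * (ww gam s) + 3 * (cc gam s)^3 * (ww gam s) * (ww1 gam s) + (-3) * (cc gam s)^3 * (dd gam s) + 2 * (cc gam s)^3 * (dd gam s) * (ww gam s)^2 + 1 * (cc gam s)^4 * (dd gam s) * (ww gam s))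
  | 1 => ((-1) * (zz gam s) * (dd gam s) * (ww2 gam s) + 1 * (zz gam s) * (dd gam s) * (ww gam s)^3 + 2 * (zz gam s) * (dd gam s)^2 * (ww1 gam s) + 2 * (zz gam s) * (dd gam s)^3 * (ww gam s) + (-1) * (zz gam s) * (dd gam s)^4 * (ww1 gam s) + (-3) * (zz gam s) * (cc gam s) * (ww gam s) * (ww1 gam s) + 9 * (zz gam s) * (cc gam s) * (dd gam s) * (ww gam s)^2 + 2 * (zz gam s) * (cc gam s) * (dd gam s)^3 + (-2) * (zz gam s) * (cc gam s) * (dd gam s)^3 * (ww gam s)^2 + (-3) * (zz gam s) * (cc gam s)^2 * (ww1 gam s) + 9 * (zz gam s) * (cc gam s)^2 * (dd gam s) * (ww gam s) + (-1) * (zz gam s) * (cc gam s)^2 * (dd gam s)^2 * (ww1 gam s) + (-1) * (zz gam s) * (cc gam s)^2 * (dd gam s)^3 * (ww gam s) + 3 * (zz gam s) * (cc gam s)^3 * (dd gam s) + (-2) * (zz gam s) * (cc gam s)^3 * (dd gam s) * (ww gam s)^2 + (-1) * (zz gam s) * (cc gam s)^4 * (dd gam s) * (ww gam s))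
  | 2 => ((-3) * (zz gam s) * (dd gam s) * (ww gam s) * (ww1 gam s) + 4 * (zz gam s) * (dd gam s)^2 * (ww gam s)^2 + (-1) * (zz gam s) * (dd gam s)^4 * (ww gam s)^2 + 1 * (zz gam s) * (cc gam s) * (ww2 gam s) + (-1) * (zz gam s) * (cc gam s) * (ww gam s)^3 + (-5) * (zz gam s) * (cc gam s) * (dd gam s) * (ww1 gam s) + 2 * (zz gam s) * (cc gam s) * (dd gam s)^2 * (ww gam s) + 1 * (zz gam s) * (cc gam s) * (dd gam s)^3 * (ww1 gam s) + (-1) * (zz gam s) * (cc gam s) * (dd gam s)^4 * (ww gam s) + (-5) * (zz gam s) * (cc gam s)^2 * (ww gam s)^2 + (-2) * (zz gam s) * (cc gam s)^2 * (dd gam s)^2 + (-5) * (zz gam s) * (cc gam s)^3 * (ww gam s) + 1 * (zz gam s) * (cc gam s)^3 * (dd gam s) * (ww1 gam s) + (-1) * (zz gam s) * (cc gam s)^3 * (dd gam s)^2 * (ww gam s) + (-3) * (zz gam s) * (cc gam s)^4 + 1 * (zz gam s) * (cc gam s)^4 * (ww gam s)^2)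
  | _ => 0
  end.

Definition Ecl (gam : R -> point) (lam s : R) : R := (1 * (ww2 gam s) + (-2) * (ww gam s) + (-1) * (ww gam s) * lam + (-1) * (ww gam s)^3 + (-1) * (dd gam s) * (ww1 gam s) + (-2) * (cc gam s) + (-1) * (cc gam s) * lam + (-4) * (cc gam s) * (ww gam s)^2 + (-3) * (cc gam s)^2 * (ww gam s) + (-1) * (cc gam s)^3).

Definition Xi (gam : R -> point) (i0 : nat) (s : R) : R :=
  match i0 with
  | 0 => (1 * (dd gam s))
  | 1 => ((-1) * (zz gam s) * (dd gam s))
  | 2 => (1 * (zz gam s) * (cc gam s))
  | _ => 0
  end.

Definition Qcf (gam : R -> point) (i0 : nat) (lam s : R) : R :=
  match i0 with
  | 0 => (1 * (dd gam s) * (ww2 gam s) + (-2) * (dd gam s) * (ww gam s) + (-1) * (dd gam s) * (ww gam s) * lam + (-1) * (dd gam s) * (ww gam s)^3 + 2 * (dd gam s)^2 * (ww1 gam s) + (-1) * (dd gam s)^3 * (ww2 gam s) + (-1) * (dd gam s)^3 * (ww gam s) + 1 * (dd gam s)^3 * (ww gam s) * lam + 1 * (dd gam s)^3 * (ww gam s)^3 + (-2) * (cc gam s) * (dd gam s) + 5 * (cc gam s) * (dd gam s) * (ww gam s)^2 + (-3) * (cc gam s) * (dd gam s)^2 * (ww gam s) * (ww1 gam s) + (-1) * (cc gam s) * (dd gam s)^3 * (ww gam s)^2 + (-2) * (cc gam s)^2 * (ww1 gam s) + (-1) * (cc gam s)^2 * (dd gam s) * (ww2 gam s) + 3 * (cc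 gam s)^2 * (dd gam s) * (ww gam s) + 1 * (cc gam s)^2 * (dd gam s) * (ww gam s) * lam + 1 * (cc gam s)^2 * (dd gam s) * (ww gam s)^3 + (-1) * (cc gam s)^2 * (dd gam s)^3 * (ww gam s) + (-3) * (cc gam s)^3 * (ww gam s) * (ww1 gam s) + (-1) * (cc gam s)^3 * (dd gam s) * (ww gam s)^2 + (-1) * (cc gam s)^4 * (dd gam s) * (ww gam s))
  | 1 => (2 * (zz gam s) * (dd gam s) * (ww gam s) + (-1) * (zz gam s) * (dd gam s)^2 * (ww1 gam s) + 3 * (zz gam s) * (cc gam s) * (ww gam s) * (ww1 gam s) + 2 * (zz gam s) * (cc gam s) * (dd gam s) + (-5) * (zz gam s) * (cc gam s) * (dd gam s) * (ww gam s)^2 + 1 * (zz gam s) * (cc gam s) * (dd gam s)^3 * (ww gam s)^2 + 3 * (zz gam s) * (cc gam s)^2 * (ww1 gam s) + (-4) * (zz gam s) * (cc gam s)^2 * (dd gam s) * (ww gam s) + 1 * (zz gam s) * (cc gam s)^2 * (dd gam s)^3 * (ww gam s) + 1 * (zz gam s) * (cc gam s)^3 * (dd gam s) * (ww gam s)^2 + 1 * (zz gam s) * (cc gam s)^4 * (dd gam s) * (ww gam s))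
  | 2 => (3 * (zz gam s) * (dd gam s) * (ww gam s) * (ww1 gam s) + (-4) * (zz gam s) * (dd gam s)^2 * (ww gam s)^2 + 1 * (zz gam s) * (dd gam s)^4 * (ww gam s)^2 + (-2) * (zz gam s) * (cc gam s) * (ww gam s) + 4 * (zz gam s) * (cc gam s) * (dd gam s) * (ww1 gam s) + (-4) * (zz gam s) * (cc gam s) * (dd gam s)^2 * (ww gam s) + 1 * (zz gam s) * (cc gam s) * (dd gam s)^4 * (ww gam s) + (-2) * (zz gam s) * (cc gam s)^2 + 1 * (zz gam s) * (cc gam s)^2 * (ww gam s)^2 + 1 * (zz gam s) * (cc gam s)^2 * (dd gam s)^2 * (ww gam s)^2 + 1 * (zz gam s) * (cc gam s)^3 * (dd gam s)^2 * (ww gam s))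
  | _ => 0
  end.

Ltac nzs := repeat split;
  repeat match goal with
  | |- _ * _ <> 0 => apply Rmult_integral_contrapositive_currified
  | |- _ ^ _ <> 0 => apply pow_nonzero
  end; try (intro; nra); try nra; try lra.
Ltac dsolve := apply is_derive_unique; auto_derive;
  [nzs | try (field; nzs); try ring].

Lemma sl_dep (x y : point) i j : x 2%nat = y 2%nat -> sl2_metric x i j = sl2_metric y i j.
Proof. intros H; unfold sl2_metric; rewrite H; reflexivity. Qed.

Lemma pd_sl (x : point) l j m : 0 < x 2%nat ->
  pd l (fun y => sl2_metric y j m) x = if Nat.eqb l 2 then dslm j m (x 2%nat) else 0.
Proof.
  intros Hx. destruct (Nat.eqb_spec l 2) as [->|Hl].
  - unfold pd, sl2_metric, dslm, upd.
    destruct j as [|[|[|j]]]; destruct m as [|[|[|m]]]; simpl; dsolve.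
  - apply pd_const. intros t. apply sl_dep. apply upd_other. auto.
Qed.

Lemma chr_sl (x : point) k i j : 0 < x 2%nat ->
  christoffel 3 sl2_metric sl2_metric_inv x k i j = Csl k i j (x 2%nat).
Proof.
  intros Hx. unfold christoffel. cbn [rsum]. rewrite !(pd_sl x _ _ _ Hx).
  unfold sl2_metric_inv, sl2_metric, Csl, dslm.
  destruct k as [|[|[|k]]]; destruct i as [|[|[|i]]]; destruct j as [|[|[|j]]];
   simpl; try (field; nzs); try ring.
Qed.

Lemma pd_chr (x : point) i k j l : 0 < x 2%nat ->
  pd i (fun y => christoffel 3 sl2_metric sl2_metric_inv y k j l) x
  = if Nat.eqb i 2 then DCsl k j l (x 2%nat) else 0.
Proof.
  intros Hx. destruct (Nat.eqb_spec i 2) as [->|Hi].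
  - apply (pd_loc _ (fun t => Csl k j l t) x 2 (fun t => 0 < t)).
    + exact pos_open.
    + exact Hx.
    + intros t Ht. rewrite chr_sl; rewrite upd_same; auto.
    + unfold Csl, DCsl.
      destruct k as [|[|[|k]]]; destruct j as [|[|[|j]]]; destruct l as [|[|[|l]]];
       simpl; auto_derive; try nzs; try (field; nzs); try ring.
  - apply pd_const. intros t. rewrite !chr_sl; rewrite ?upd_other; auto.
Qed.

Lemma riem_sl (x : point) k i j l : 0 < x 2%nat ->
  riem 3 sl2_metric sl2_metric_inv x k i j l = Rsl k i j l (x 2%nat).
Proof.
  intros Hx. unfold riem. cbn [rsum].
  rewrite !(pd_chr x _ _ _ _ Hx), !(chr_sl x _ _ _ Hx).
  unfold Rsl, DCsl, Csl.
  destruct k as [|[|[|k]]]; destruct i as [|[|[|i]]]; destruct j as [|[|[|j]]];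
  destruct l as [|[|[|l]]]; simpl; try (field; nzs); try ring.
Qed.

Lemma pd_h (x : point) l j m : 0 < x 1%nat ->
  pd l (fun y => hyp_metric y j m) x = if Nat.eqb l 1 then dhm j m (x 1%nat) else 0.
Proof.
  intros Hx. destruct (Nat.eqb_spec l 1) as [->|Hl].
  - unfold pd, hyp_metric, dhm, upd.
    destruct j as [|[|j]]; destruct m as [|[|m]]; simpl; dsolve.
  - apply pd_const. intros t. unfold hyp_metric. rewrite upd_other; auto.
Qed.

Lemma chr_h (x : point) k i j : 0 < x 1%nat ->
  christoffel 2 hyp_metric hyp_metric_inv x k i j = Ch k i j (x 1%nat).
Proof.
  intros Hx. unfold christoffel. cbn [rsum]. rewrite !(pd_h x _ _ _ Hx).
  unfold hyp_metric_inv, hyp_metric, Ch, dhm.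
  destruct k as [|[|k]]; destruct i as [|[|i]]; destruct j as [|[|j]];
   simpl; try (field; nzs); try ring.
Qed.

Definition Iab (a b : Rbar) (s : R) : Prop := Rbar_lt a s /\ Rbar_lt s b.

Section Main.
Variables (a b : Rbar) (gam : R -> point).
Hypothesis Hsm : forall (k m : nat) (s : R), Iab a b s -> (k < 2)%nat ->
      ex_derive_n (fun t => gam t k) m s.
Hypothesis Hpos : forall s, Iab a b s -> 0 < gam s 1%nat.
Hypothesis Harc : forall s, Iab a b s ->
      rsum 2 (fun i => rsum 2 (fun j =>
        hyp_metric (gam s) i j * vel gam s i * vel gam s j)) = 1.

Lemma I_open : open (Iab a b).
Proof.
  intros x [H1 H2]. apply filter_and; [apply open_Rbar_gt | apply open_Rbar_lt]; auto.
Qed.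

Lemma zpos s : Iab a b s -> 0 < zz gam s.
Proof. apply Hpos. Qed.

Lemma exjy m s : Iab a b s -> ex_derive (fun x => jy gam m x) s.
Proof. intros H. exact (Hsm 0 (S m) s H ltac:(lia)). Qed.
Lemma exjz m s : Iab a b s -> ex_derive (fun x => jz gam m x) s.
Proof. intros H. exact (Hsm 1 (S m) s H ltac:(lia)). Qed.
Lemma exzz s : Iab a b s -> ex_derive (fun x => zz gam x) s.
Proof. intros H. exact (Hsm 1 1 s H ltac:(lia)). Qed.

Lemma Djy m s : Derive (fun x => jy gam m x) s = jy gam (S m) s.
Proof. reflexivity. Qed.
Lemma Djz m s : Derive (fun x => jz gam m x) s = jz gam (S m) s.
Proof. reflexivity. Qed.
Lemma Dzz0 s : Derive (fun x => zz gam x) s = jz gam 1 s.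
Proof. reflexivity. Qed.

Lemma C1 s : Iab a b s -> (jy gam 1 s)^2 + (jz gam 1 s)^2 - (zz gam s)^2 = 0.
Proof.
  intros Hs. pose proof (zpos s Hs) as Hz. pose proof (Harc s Hs) as H.
  cbn [rsum] in H. unfold hyp_metric in H.
  change (vel gam s 0%nat) with (jy gam 1 s) in H.
  change (vel gam s 1%nat) with (jz gam 1 s) in H.
  change (gam s 1%nat) with (zz gam s) in H.
  assert (E : (jy gam 1 s)^2 + (jz gam 1 s)^2 = (zz gam s)^2 *
      (0 + (0 + / zz gam s ^ 2 * jy gam 1 s * jy gam 1 s + 0 * jy gam 1 s * jz gam 1 s) +
       (0 + 0 * jz gam 1 s * jy gam 1 s + / zz gam s ^ 2 * jz gam 1 s * jz gam 1 s)))
   by (field; nzs).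
  rewrite H in E. rewrite E. ring.
Qed.

Lemma C2 s : Iab a b s ->
  jy gam 1 s * jy gam 2 s + jz gam 1 s * jz gam 2 s - zz gam s * jz gam 1 s = 0.
Proof.
  intros Hs.
  assert (HD : Derive (fun x => (jy gam 1 x)^2 + (jz gam 1 x)^2 - (zz gam x)^2) s = 0).
  { rewrite (Derive_ext_loc _ (fun _ => 0)). apply Derive_const.
    apply (filter_imp (Iab a b)). intros t Ht. apply C1; auto. apply I_open; auto. }
  assert (HD2 : is_derive (fun x => (jy gam 1 x)^2 + (jz gam 1 x)^2 - (zz gam x)^2) s
     (2 * (jy gam 1 s * jy gam 2 s + jz gam 1 s * jz gam 2 s - zz gam s * jz gam 1 s))).
  { auto_derive.
    - repeat split; auto using exjy, exjz, exzz.
    - rewrite Djy, Djz, Dzz0. ring. }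
  apply is_derive_unique in HD2.
  assert (E : 2 * (jy gam 1 s * jy gam 2 s + jz gam 1 s * jz gam 2 s - zz gam s * jz gam 1 s) = 0)
    by (rewrite <- HD2; exact HD).
  lra.
Qed.

Lemma Cd s : Iab a b s -> (cc gam s)^2 + (dd gam s)^2 - 1 = 0.
Proof.
  intros Hs. pose proof (zpos s Hs). pose proof (C1 s Hs) as H1.
  transitivity (((jy gam 1 s)^2 + (jz gam 1 s)^2 - (zz gam s)^2) / (zz gam s)^2).
  - unfold cc, dd. field. nzs.
  - rewrite H1. field. nzs.
Qed.

Lemma Ejy1 s : Iab a b s -> jy gam 1 s = zz gam s * cc gam s.
Proof. intros Hs. pose proof (zpos s Hs). unfold cc. field. nzs. Qed.
Lemma Ejz1 s : Iab a b s -> jz gam 1 s = zz gam s * dd gam s.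
Proof. intros Hs. pose proof (zpos s Hs). unfold dd. field. nzs. Qed.

Lemma Ejy2 s : Iab a b s -> jy gam 2 s = zz gam s * (dd gam s * cc gam s - dd gam s * ww gam s).
Proof.
  intros Hs. pose proof (zpos s Hs). pose proof (C1 s Hs) as H1. pose proof (C2 s Hs) as H2.
  apply Rminus_diag_uniq.
  transitivity ((- jy gam 2 s * ((jy gam 1 s)^2 + (jz gam 1 s)^2 - (zz gam s)^2)
      + jy gam 1 s * (jy gam 1 s * jy gam 2 s + jz gam 1 s * jz gam 2 s - zz gam s * jz gam 1 s))
      / (zz gam s)^2).
  - unfold cc, dd, ww. field. nzs.
  - rewrite H1, H2. field. nzs.
Qed.

Lemma Ejz2 s : Iab a b s -> jz gam 2 s = zz gam s * (dd gam s * dd gam s + cc gam s * ww gam s).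
Proof.
  intros Hs. pose proof (zpos s Hs). pose proof (C1 s Hs) as H1. pose proof (C2 s Hs) as H2.
  apply Rminus_diag_uniq.
  transitivity ((- jz gam 2 s * ((jy gam 1 s)^2 + (jz gam 1 s)^2 - (zz gam s)^2)
      + jz gam 1 s * (jy gam 1 s * jy gam 2 s + jz gam 1 s * jz gam 2 s - zz gam s * jz gam 1 s))
      / (zz gam s)^2).
  - unfold cc, dd, ww. field. nzs.
  - rewrite H1, H2. field. nzs.
Qed.

Lemma iszz s : Iab a b s -> is_derive (fun x => zz gam x) s (zz gam s * dd gam s).
Proof.
  intros Hs. rewrite <- Ejz1 by auto. rewrite <- Dzz0. apply Derive_correct. apply exzz; auto.
Qed.

Lemma iscc s : Iab a b s -> is_derive (fun x => cc gam x) s (- dd gam s * ww gam s).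
Proof.
  intros Hs. pose proof (zpos s Hs). unfold cc at 1. auto_derive.
  - repeat split; auto using exjy, exzz; nzs.
  - rewrite Djy, Dzz0, Ejy2 by auto. unfold cc, dd. field. nzs.
Qed.

Lemma isdd s : Iab a b s -> is_derive (fun x => dd gam x) s (cc gam s * ww gam s).
Proof.
  intros Hs. pose proof (zpos s Hs). unfold dd at 1. auto_derive.
  - repeat split; auto using exjz, exzz; nzs.
  - rewrite Djz, Dzz0, Ejz2 by auto. unfold cc, dd. field. nzs.
Qed.

Lemma isww s : Iab a b s -> is_derive (fun x => ww gam x) s (ww1 gam s).
Proof.
  intros Hs. pose proof (zpos s Hs). unfold ww at 1. auto_derive.
  - repeat split; auto using exjy, exjz, exzz; nzs.
  - rewrite !Djy, !Djz, Dzz0. unfold ww1. field. nzs.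
Qed.

Lemma isww1 s : Iab a b s -> is_derive (fun x => ww1 gam x) s (ww2 gam s).
Proof.
  intros Hs. pose proof (zpos s Hs). unfold ww1 at 1. auto_derive.
  - repeat split; auto using exjy, exjz, exzz; nzs.
  - rewrite !Djy, !Djz, Dzz0. unfold ww2. field. nzs.
Qed.

Lemma exzz' s : Iab a b s -> ex_derive (fun x => zz gam x) s.
Proof. intros H; eexists; apply iszz; auto. Qed.
Lemma excc s : Iab a b s -> ex_derive (fun x => cc gam x) s.
Proof. intros H; eexists; apply iscc; auto. Qed.
Lemma exdd s : Iab a b s -> ex_derive (fun x => dd gam x) s.
Proof. intros H; eexists; apply isdd; auto. Qed.
Lemma exww s : Iab a b s -> ex_derive (fun x => ww gam x) s.
Proof. intros H; eexists; apply isww; auto. Qed.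
Lemma exww1 s : Iab a b s -> ex_derive (fun x => ww1 gam x) s.
Proof. intros H; eexists; apply isww1; auto. Qed.

Lemma Dzz s : Iab a b s -> Derive (fun x => zz gam x) s = zz gam s * dd gam s.
Proof. intros; apply is_derive_unique, iszz; auto. Qed.
Lemma Dcc s : Iab a b s -> Derive (fun x => cc gam x) s = - dd gam s * ww gam s.
Proof. intros; apply is_derive_unique, iscc; auto. Qed.
Lemma Ddd s : Iab a b s -> Derive (fun x => dd gam x) s = cc gam s * ww gam s.
Proof. intros; apply is_derive_unique, isdd; auto. Qed.
Lemma Dww s : Iab a b s -> Derive (fun x => ww gam x) s = ww1 gam s.
Proof. intros; apply is_derive_unique, isww; auto. Qed.
Lemma Dww1 s : Iab a b s -> Derive (fun x => ww1 gam x) s = ww2 gam s.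
Proof. intros; apply is_derive_unique, isww1; auto. Qed.

Ltac cfd Hs :=
  let Hz := fresh in pose proof (zpos _ Hs) as Hz;
  auto_derive;
  [ repeat split; auto using exzz', excc, exdd, exww, exww1
  | rewrite ?(Dzz _ Hs), ?(Dcc _ Hs), ?(Ddd _ Hs), ?(Dww _ Hs), ?(Dww1 _ Hs);
    try (field; nzs); try ring ].



Lemma K_cf s : Iab a b s -> signed_curv gam s = cc gam s + ww gam s.
Proof.
  intros Hs. pose proof (zpos s Hs) as Hz. pose proof (Cd s Hs) as Hcd.
  unfold signed_curv, acc, unormal. cbn [rsum].
  rewrite !(chr_h (gam s)) by exact Hz.
  change (Derive (fun t => vel gam t 0%nat) s) with (jy gam 2 s).
  change (Derive (fun t => vel gam t 1%nat) s) with (jz gam 2 s).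
  change (vel gam s 0%nat) with (jy gam 1 s).
  change (vel gam s 1%nat) with (jz gam 1 s).
  unfold hyp_metric, Ch. simpl.
  change (gam s 1%nat) with (zz gam s).
  rewrite Ejy2, Ejz2, Ejy1, Ejz1 by auto.
  apply Rminus_diag_uniq.
  transitivity ((cc gam s + ww gam s) * ((cc gam s)^2 + (dd gam s)^2 - 1)).
  - field. nzs.
  - rewrite Hcd. ring.
Qed.

Lemma K1_cf s : Iab a b s ->
  Derive_n (signed_curv gam) 1 s = - dd gam s * ww gam s + ww1 gam s.
Proof.
  intros Hs. change (Derive (fun x => signed_curv gam x) s = - dd gam s * ww gam s + ww1 gam s).
  rewrite (Derive_ext_loc _ (fun x => cc gam x + ww gam x)).
  - apply is_derive_unique. cfd Hs.
  - apply (filter_imp (Iab a b)). intros t Ht. apply K_cf; auto. apply I_open; auto.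
Qed.

Lemma K2_cf s : Iab a b s ->
  Derive_n (signed_curv gam) 2 s =
   - (cc gam s * ww gam s) * ww gam s - dd gam s * ww1 gam s + ww2 gam s.
Proof.
  intros Hs. change (Derive (Derive_n (signed_curv gam) 1) s =
   - (cc gam s * ww gam s) * ww gam s - dd gam s * ww1 gam s + ww2 gam s).
  rewrite (Derive_ext_loc _ (fun x => - dd gam x * ww gam x + ww1 gam x)).
  - apply is_derive_unique. cfd Hs.
  - apply (filter_imp (Iab a b)). intros t Ht. apply K1_cf; auto. apply I_open; auto.
Qed.

Lemma pd_cf (X : point -> R) (F : R -> R) (u : point) l i :
  (forall w, Iab a b (w 0%nat) -> X w = F (w 0%nat)) -> Iab a b (u 0%nat) ->
  is_derive F (u 0%nat) l -> pd i X u = if Nat.eqb i 0 then l else 0.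
Proof.
  intros HX Hu HD. destruct (Nat.eqb_spec i 0) as [->|Hi].
  - apply (pd_loc X F u 0 (Iab a b)).
    + apply I_open.
    + exact Hu.
    + intros t Ht. rewrite HX; rewrite upd_same; auto.
    + exact HD.
  - apply pd_const. intros t. rewrite !HX; rewrite ?upd_other; auto.
Qed.

Ltac simp u :=
  cbn [rsum DP DDP Mcf DMcf MIcf ICcf Tcf DTcf CTcf DCTcf CCTcf BTcf Csl Rsl
       sl2_metric Nat.eqb Xi Qcf];
  change (cylinder gam u 2%nat) with (zz gam (u 0%nat)) in *.

Lemma L_dphi u : Iab a b (u 0%nat) -> forall i k,
  dphi (cylinder gam) i u k = DP gam i k (u 0%nat).
Proof.
  intros Hu i k. pose proof (zpos _ Hu).
  unfold dphi, pd, upd.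
  destruct i as [|[|i]]; destruct k as [|[|[|k]]]; simpl;
  try change (Derive (fun t => gam t 0%nat) (u 0%nat)) with (jy gam 1 (u 0%nat));
  try change (Derive (fun t => gam t 1%nat) (u 0%nat)) with (jz gam 1 (u 0%nat));
  rewrite ?Ejy1, ?Ejz1 by auto; cbn [DP];
  try (rewrite Derive_const; reflexivity);
  try ring;
  try (apply is_derive_unique; auto_derive; auto; ring).
Qed.

Lemma L_pdphi u : Iab a b (u 0%nat) -> forall i j k,
  pd i (fun w => dphi (cylinder gam) j w k) u
  = if Nat.eqb i 0 then DDP gam j k (u 0%nat) else 0.
Proof.
  intros Hu i j k. apply (pd_cf _ (fun s => DP gam j k s)); auto.
  - intros w Hw. apply L_dphi; auto.
  - destruct j as [|[|j]]; destruct k as [|[|[|k]]]; cbn [DP DDP]; cfd Hu.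
Qed.

Lemma L_M u : Iab a b (u 0%nat) -> forall i j,
  ind_metric 3 sl2_metric (cylinder gam) u i j = Mcf gam i j (u 0%nat).
Proof.
  intros Hu i j. pose proof (zpos _ Hu).
  unfold ind_metric. cbn [rsum]. rewrite !(L_dphi u Hu).
  destruct i as [|[|i]]; destruct j as [|[|j]]; simp u; try (field; nzs); try ring.
Qed.

Lemma L_pdM u : Iab a b (u 0%nat) -> forall i j k,
  pd i (fun w => ind_metric 3 sl2_metric (cylinder gam) w j k) u
  = if Nat.eqb i 0 then DMcf gam j k (u 0%nat) else 0.
Proof.
  intros Hu i j k. apply (pd_cf _ (fun s => Mcf gam j k s)); auto.
  - intros w Hw. apply L_M; auto.
  - destruct j as [|[|j]]; destruct k as [|[|k]]; cbn [Mcf DMcf]; cfd Hu.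
Qed.

Lemma det_M s : Iab a b s ->
  Mcf gam 0 0 s * Mcf gam 1 1 s - Mcf gam 0 1 s * Mcf gam 1 0 s = 1.
Proof.
  intros Hs. pose proof (Cd s Hs) as Hcd. cbn [Mcf].
  apply Rminus_diag_uniq.
  transitivity (1 * ((cc gam s)^2 + (dd gam s)^2 - 1)); [ring | rewrite Hcd; ring].
Qed.

Lemma L_MI u : Iab a b (u 0%nat) -> forall i j,
  ind_metric_inv 3 sl2_metric (cylinder gam) u i j = MIcf gam i j (u 0%nat).
Proof.
  intros Hu i j. unfold ind_metric_inv, inv2. rewrite !(L_M u Hu).
  destruct i as [|[|i]]; destruct j as [|[|j]]; cbv beta zeta iota;
   rewrite ?(det_M _ Hu); cbn [Mcf MIcf]; try field; try ring.
Qed.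

Lemma L_IC u : Iab a b (u 0%nat) -> forall c i j,
  ind_chr 3 sl2_metric (cylinder gam) u c i j = ICcf gam c i j (u 0%nat).
Proof.
  intros Hu c i j. pose proof (zpos _ Hu).
  unfold ind_chr, christoffel. cbn [rsum].
  rewrite !(L_MI u Hu), !(L_pdM u Hu).
  destruct c as [|[|c]]; destruct i as [|[|i]]; destruct j as [|[|j]]; simp u;
   try (field; nzs); try ring.
Qed.

Lemma cylpos u : Iab a b (u 0%nat) -> 0 < cylinder gam u 2%nat.
Proof. intros Hu. exact (zpos _ Hu). Qed.

Lemma L_T u : Iab a b (u 0%nat) -> forall k,
  tension 3 sl2_metric sl2_metric_inv (cylinder gam) u k = Tcf gam k (u 0%nat).
Proof.
  intros Hu k. pose proof (zpos _ Hu). pose proof (cylpos _ Hu) as Hc.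
  unfold tension, cov. cbn [rsum].
  rewrite !(L_pdphi u Hu), !(chr_sl _ _ _ _ Hc), !(L_dphi u Hu), !(L_MI u Hu), !(L_IC u Hu).
  destruct k as [|[|[|k]]]; simp u; try (field; nzs); try ring.
Qed.

Lemma L_pdT u : Iab a b (u 0%nat) -> forall i k,
  pd i (fun w => tension 3 sl2_metric sl2_metric_inv (cylinder gam) w k) u
  = if Nat.eqb i 0 then DTcf gam k (u 0%nat) else 0.
Proof.
  intros Hu i k. apply (pd_cf _ (fun s => Tcf gam k s)); auto.
  - intros w Hw. apply L_T; auto.
  - destruct k as [|[|[|k]]]; cbn [Tcf DTcf]; cfd Hu.
Qed.

Lemma L_CT u : Iab a b (u 0%nat) -> forall j k,
  cov 3 sl2_metric sl2_metric_inv (cylinder gam) j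
    (tension 3 sl2_metric sl2_metric_inv (cylinder gam)) u k = CTcf gam j k (u 0%nat).
Proof.
  intros Hu j k. pose proof (zpos _ Hu). pose proof (cylpos _ Hu) as Hc.
  unfold cov. cbn [rsum].
  rewrite !(L_pdT u Hu), !(chr_sl _ _ _ _ Hc), !(L_dphi u Hu), !(L_T u Hu).
  destruct j as [|[|j]]; destruct k as [|[|[|k]]]; simp u; try (field; nzs); try ring.
Qed.

Lemma L_pdCT u : Iab a b (u 0%nat) -> forall i j k,
  pd i (fun w => cov 3 sl2_metric sl2_metric_inv (cylinder gam) j
    (tension 3 sl2_metric sl2_metric_inv (cylinder gam)) w k) u
  = if Nat.eqb i 0 then DCTcf gam j k (u 0%nat) else 0.
Proof.
  intros Hu i j k. apply (pd_cf _ (fun s => CTcf gam j k s)); auto.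
  - intros w Hw. apply L_CT; auto.
  - destruct j as [|[|j]]; destruct k as [|[|[|k]]]; cbn [CTcf DCTcf]; cfd Hu.
Qed.

Lemma L_CCT u : Iab a b (u 0%nat) -> forall i j k,
  cov 3 sl2_metric sl2_metric_inv (cylinder gam) i
   (cov 3 sl2_metric sl2_metric_inv (cylinder gam) j
    (tension 3 sl2_metric sl2_metric_inv (cylinder gam))) u k = CCTcf gam i j k (u 0%nat).
Proof.
  intros Hu i j k. pose proof (zpos _ Hu). pose proof (cylpos _ Hu) as Hc.
  unfold cov at 1. cbn [rsum].
  rewrite !(L_pdCT u Hu), !(chr_sl _ _ _ _ Hc), !(L_dphi u Hu), !(L_CT u Hu).
  destruct i as [|[|i]]; destruct j as [|[|j]]; destruct k as [|[|[|k]]]; simp u;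
   try (field; nzs); try ring.
Qed.

Lemma L_BT u : Iab a b (u 0%nat) -> forall k,
  bitension 3 sl2_metric sl2_metric_inv (cylinder gam) u k = BTcf gam k (u 0%nat).
Proof.
  intros Hu k. pose proof (zpos _ Hu). pose proof (cylpos _ Hu) as Hc.
  unfold bitension, rough_lap. cbn [rsum].
  rewrite !(L_CCT u Hu), !(L_CT u Hu), !(riem_sl _ _ _ _ _ Hc), !(L_dphi u Hu),
    !(L_MI u Hu), !(L_IC u Hu), !(L_T u Hu).
  destruct k as [|[|[|k]]]; simp u; try (field; nzs); try ring.
Qed.

Lemma L_NP u lam : Iab a b (u 0%nat) -> forall k,
  normal_part 3 sl2_metric (cylinder gam) (bitension 3 sl2_metric sl2_metric_inv (cylinder gam)) u k
  - lam * normal_part 3 sl2_metric (cylinder gam) (tension 3 sl2_metric sl2_metric_inv (cylinder gam)) u k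
  = Ecl gam lam (u 0%nat) * Xi gam k (u 0%nat).
Proof.
  intros Hu k. pose proof (zpos _ Hu). pose proof (Cd _ Hu) as Hcd.
  unfold normal_part. cbn [rsum].
  rewrite !(L_BT u Hu), !(L_T u Hu), !(L_MI u Hu), !(L_dphi u Hu).
  apply Rminus_diag_uniq.
  transitivity (Qcf gam k lam (u 0%nat) * ((cc gam (u 0%nat))^2 + (dd gam (u 0%nat))^2 - 1)).
  - unfold Ecl. destruct k as [|[|[|k]]]; simp u; try (field; nzs); try ring.
  - rewrite Hcd. ring.
Qed.

Lemma fwd lam :
  biminimal 3 sl2_metric sl2_metric_inv (cylinder gam) lam (fun u => Iab a b (u 0%nat)) ->
  biminimal_curve_H2 gam (lam + 1) (Iab a b).
Proof.
  intros Hbm s Hs. cbv zeta. rewrite K2_cf, K_cf by auto.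
  pose proof (zpos _ Hs) as Hz. pose proof (Cd _ Hs) as Hcd.
  set (u := fun _ : nat => s).
  assert (Hu : Iab a b (u 0%nat)) by exact Hs.
  pose proof (Hbm u Hu 0%nat ltac:(lia)) as H0.
  pose proof (Hbm u Hu 2%nat ltac:(lia)) as H2.
  rewrite L_NP in H0, H2 by exact Hu. cbn [Xi] in H0, H2.
  change (u 0%nat) with s in H0, H2.
  assert (E2 : Ecl gam lam s * cc gam s = 0).
  { assert (Ecl gam lam s * cc gam s * (zz gam s) = 0) by (rewrite <- H2; ring).
    apply Rmult_integral in H. destruct H; auto. lra. }
  assert (E0 : Ecl gam lam s * dd gam s = 0) by (rewrite <- H0; ring).
  transitivity (cc gam s * (Ecl gam lam s * cc gam s) + dd gam s * (Ecl gam lam s * dd gam s)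
     - Ecl gam lam s * ((cc gam s)^2 + (dd gam s)^2 - 1)).
  - unfold Ecl. ring.
  - rewrite E0, E2, Hcd. ring.
Qed.

Lemma bwd lam :
  biminimal_curve_H2 gam (lam + 1) (Iab a b) ->
  biminimal 3 sl2_metric sl2_metric_inv (cylinder gam) lam (fun u => Iab a b (u 0%nat)).
Proof.
  intros Hc u Hu k Hk. rewrite L_NP by exact Hu.
  pose proof (Hc (u 0%nat) Hu) as H. cbv zeta in H.
  rewrite K2_cf, K_cf in H by auto.
  assert (E : Ecl gam lam (u 0%nat) = 0) by (rewrite <- H; unfold Ecl; ring).
  rewrite E. ring.
Qed.

End Main.

Theorem proposition5p3 (a b : Rbar) (gam : R -> point) (lambda : R) :
  Rbar_lt a b ->
  let I := fun s : R => Rbar_lt a s /\ Rbar_lt s b in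
  (* gamma is smooth on I *)
  (forall (k m : nat) (s : R), I s -> (k < 2)%nat ->
      ex_derive_n (fun t => gam t k) m s) ->
  (* gamma lies in H^2 *)
  (forall s, I s -> 0 < gam s 1%nat) ->
  (* arc-length parametrisation *)
  (forall s, I s ->
      rsum 2 (fun i => rsum 2 (fun j =>
        hyp_metric (gam s) i j * vel gam s i * vel gam s j)) = 1) ->
  (biminimal 3 sl2_metric sl2_metric_inv (cylinder gam) lambda
      (fun u => I (u 0%nat))
   <-> biminimal_curve_H2 gam (lambda + 1) I).
Proof.
  intros Hab I Hsm Hpos Harc. split.
  - apply (fwd a b gam Hsm Hpos Harc).
  - apply (bwd a b gam Hsm Hpos Harc).
Qed.
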